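(* For all integers $m,n\ge 1$, $$P_{m-1} (n P_{n-1}-n P_{n}+P_{n})+P_{m} ((n+1) P_{n-1}+ 2 n P_{n}-(n-1) P_{n+1})+P_{m+1} ((n+1) P_{n}+n P_{n+1})= n (P_{m+n-1}+P_{m+n+1})+2 P_{m+n},$$ where $P_k$ denotes the $k$-th Pell number.
   Context: The Pell numbers are defined by $P_0=0$, $P_1=1$, $P_k=2P_{k-1}+P_{k-2}$ for $k\ge 2$. *)

(* Defs.v *)
From mathcomp Require Import all_boot all_algebra.
Import GRing.Theory.
Local Open Scope ring_scope.

Fixpoint pell (k : nat) : int :=
  match k with
  | 0 => 0
  | 1 => 1
  | (k'.+1 as k1).+1 => 2 * pell k1 + pell k'
  end.

(* Main.v *)
Require Import Defs.
From mathcomp Require Import all_boot all_algebra.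
From mathcomp Require Import ring.
Import GRing.Theory.
Local Open Scope ring_scope.
Lemma pellSS k : pell k.+2 = 2 * pell k.+1 + pell k.
Proof. by []. Qed.
Lemma pell_add a b : pell (a + b).+1 = pell a.+1 * pell b.+1 + pell a * pell b.
Proof.
have H : forall c, (forall x, pell (x + c).+1 = pell x.+1 * pell c.+1 + pell x * pell c) /\
                   (forall x, pell (x + c.+1).+1 = pell x.+1 * pell c.+2 + pell x * pell c.+1).
  elim=> [|c [IH1 IH2]].
    split=> x; first by rewrite addn0 /=; ring.
    by rewrite addn1 pellSS /=; ring.
  split=> // x.
  rewrite !addnS pellSS -addnS IH2 addnS IH1 !pellSS; ring.
by case: (H b).
Qed.

Theorem proposition7p5 (m n : nat) (hm : (1 <= m)%N) (hn : (1 <= n)%N) :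
  pell (m.-1) * (n%:Z * pell n.-1 - n%:Z * pell n + pell n)
  + pell m * ((n%:Z + 1) * pell n.-1 + 2 * n%:Z * pell n - (n%:Z - 1) * pell n.+1)
  + pell m.+1 * ((n%:Z + 1) * pell n + n%:Z * pell n.+1)
  = n%:Z * (pell (m + n).-1 + pell (m + n).+1) + 2 * pell (m + n).
Proof.
case: m hm => // a _; case: n hn => // b _.
rewrite addSn [(a.+1).-1]/= [(b.+1).-1]/= [(a + b.+1).+1.-1]/=.
rewrite [pell (a + b.+1).+2]pellSS pell_add addnS pell_add !pellSS.
set N := (b.+1)%:Z.
ring.
Qed.
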